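(* Let $k\ge1$, work in $\mathbb{R}^{k+1}$ with standard basis $e_1,\dots,e_{k+1}$ (coordinates ordered as $(\mu_1,\dots,\mu_k,s)$), and for $i\ge1$ let \[ P_i=\mathrm{Conv}\Big(\{0\}\cup\{(i-2j)\,e_\ell+j\,e_{k+1}:\ \ell\in[k],\ 0\le j\le\lfloor i/2\rfloor\}\Big), \] the Newton polytope of $\sum_{\ell=1}^k\bar\lambda_\ell M_i(\mu_\ell,s)-\bar m_i$ for nonzero $\bar\lambda_\ell,\bar m_i$. Define line segments $Q_1=\mathrm{Conv}\{0,e_1\}$, $Q_2=\mathrm{Conv}\{0,e_{k+1}\}$, and $Q_i=\mathrm{Conv}\{0,\,i\,e_{i-1}\}$ for $3\le i\le k+1$. Then for every nonzero $w\in\mathbb{R}^{k+1}$ the set \[ \mathcal I_w=\{i\in[k+1]:\ Q_i\cap\mathrm{Init}_w(P_i)\neq\emptyset\} \] is nonempty.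
   Context: Define polynomials $M_i(\mu,s)$ for $i\ge 0$ by $M_0=1$, $M_1=\mu$, $M_i=\mu M_{i-1}+(i-1)\,s\,M_{i-2}$ for $i\ge2$. For $w\in\mathbb{R}^n$ and a convex polytope $P$, $\mathrm{Init}_w(P)=\{x\in P:\langle w,x\rangle\le\langle w,y\rangle\ \forall y\in P\}$ is the face where $\langle w,\cdot\rangle$ is minimized. *)

(* Defs.v *)
(* Points of R^(k+1) are row vectors 'rV[R]_(k.+1);
   coordinate index l : 'I_(k.+1) with l < k <-> mu_(l+1), index k <-> s. *)
From HB Require Import structures.
From mathcomp Require Import all_boot all_order all_algebra.
From mathcomp Require Import reals.
Set Implicit Arguments. Unset Strict Implicit. Unset Printing Implicit Defensive.
Import Order.TTheory GRing.Theory Num.Theory.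
Local Open Scope ring_scope.

Section Defs.
Variable R : realType.

Definition conv (n : nat) (S : seq 'rV[R]_n) (x : 'rV[R]_n) : Prop :=
  exists c : 'I_(size S) -> R,
    (forall i, 0 <= c i) /\ \sum_i c i = 1 /\ x = \sum_i c i *: S`_i.

Definition dotv (n : nat) (w x : 'rV[R]_n) : R := \sum_i w 0 i * x 0 i.

Definition Init (n : nat) (w : 'rV[R]_n) (P : 'rV[R]_n -> Prop) (x : 'rV[R]_n) : Prop :=
  P x /\ forall y, P y -> dotv w x <= dotv w y.

(* standard basis vector with 0-based index *)
Definition ebas (n : nat) (l : 'I_n) : 'rV[R]_n := delta_mx 0 l.

Definition Ppts (k i : nat) : seq 'rV[R]_(k.+1) :=
  0 :: [seq ((i - 2 * j)%:R *: ebas (widen_ord (leqnSn k) l)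
             + j%:R *: ebas (@ord_max k))
       | l <- enum 'I_k, j <- iota 0 (i./2).+1].

(* nonzero endpoint of the segment Q_i (1-based i):
   Q_1 = [0,e_1], Q_2 = [0,e_(k+1)], Q_i = [0, i e_(i-1)] for 3 <= i <= k+1 *)
Definition Qend (k i : nat) : 'rV[R]_(k.+1) :=
  if i == 1%N then ebas (@ord0 k)
  else if i == 2%N then ebas (@ord_max k)
  else i%:R *: ebas (@inord k (i - 2)).

Definition Qseg (k i : nat) : seq 'rV[R]_(k.+1) := [:: 0; Qend k i].

End Defs.

(* Main.v *)
Require Import Defs.
From HB Require Import structures.
From mathcomp Require Import all_boot all_order all_algebra.
From mathcomp Require Import reals.
From mathcomp Require Import lra zify.
Import Order.TTheory GRing.Theory Num.Theory.
Local Open Scope ring_scope.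

Section Aux.
Variable R : realType.

Lemma dotvD n (w x y : 'rV[R]_n) : dotv w (x + y) = dotv w x + dotv w y.
Proof. by rewrite /dotv -big_split; apply: eq_bigr => i _; rewrite mxE mulrDr. Qed.

Lemma dotvZ n (w x : 'rV[R]_n) a : dotv w (a *: x) = a * dotv w x.
Proof. by rewrite /dotv mulr_sumr; apply: eq_bigr => i _; rewrite mxE mulrCA. Qed.

Lemma dotv0 n (w : 'rV[R]_n) : dotv w 0 = 0.
Proof. by rewrite /dotv big1 // => i _; rewrite mxE mulr0. Qed.

Lemma dotv_e n (w : 'rV[R]_n) l : dotv w (ebas R l) = w 0 l.
Proof.
rewrite /dotv /ebas (bigD1 l) //= big1 ?addr0.
  by rewrite mxE !eqxx mulr1.
move=> j /negbTE hj; rewrite mxE.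
by rewrite hj andbF mulr0.
Qed.

Lemma dotv_sum n m (w : 'rV[R]_n) (c : 'I_m -> R) (S : 'I_m -> 'rV[R]_n) :
  dotv w (\sum_i c i *: S i) = \sum_i c i * dotv w (S i).
Proof.
apply: (big_ind2 (fun x y => dotv w x = y)).
- exact: dotv0.
- by move=> x1 x2 y1 y2 <- <-; rewrite dotvD.
- by move=> i _; rewrite dotvZ.
Qed.

Lemma conv_mem n (S : seq 'rV[R]_n) x : x \in S -> conv S x.
Proof.
move=> xS; have hi : (index x S < size S)%N by rewrite index_mem.
exists (fun i => (i == Ordinal hi)%:R); split; first by move=> i; exact: ler0n.
split.
  by rewrite (bigD1 (Ordinal hi)) //= eqxx big1 ?addr0 // => i /negbTE ->.
rewrite (bigD1 (Ordinal hi)) //= eqxx scale1r nth_index // big1 ?addr0 //.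
by move=> i /negbTE ->; rewrite scale0r.
Qed.

Lemma init_min n (w : 'rV[R]_n) (S : seq 'rV[R]_n) x :
  conv S x -> (forall s, s \in S -> dotv w x <= dotv w s) -> Init w (conv S) x.
Proof.
move=> hx hs; split=> // y [c [c0 [c1 ->]]].
rewrite dotv_sum.
apply: (le_trans _ (ler_sum _ (fun i _ => ler_wpM2l (c0 i) (hs _ (mem_nth 0 (ltn_ord i)))))).
by rewrite -mulr_suml c1 mul1r.
Qed.

Lemma Ppts_val k i (w : 'rV[R]_(k.+1)) s : s \in Ppts R k i ->
  dotv w s = 0 \/ exists l : 'I_k, exists j : nat, (2 * j <= i)%N /\
   dotv w s = (i%:R - 2 * j%:R) * w 0 (widen_ord (leqnSn k) l) + j%:R * w 0 ord_max.
Proof.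
rewrite inE => /orP [/eqP->|]; first by left; rewrite dotv0.
move=> /allpairsP [[l j] [_ hj ->]] /=; right; exists l, j.
have h2 : (2 * j <= i)%N.
  move: hj; rewrite mem_iota add0n ltnS => hj.
  move: hj => /= hj; have := odd_double_half i; rewrite -muln2; case: (odd i) => /=; lia.
split=> //.
by rewrite dotvD !dotvZ !dotv_e natrB // natrM.
Qed.

End Aux.
Arguments Ppts_val {R k i} w {s}.

Theorem mainTheorem8 (R : realType) (k : nat) (hk : (1 <= k)%N)
  (w : 'rV[R]_(k.+1)) (hw : w != 0) :
  exists i : nat, (1 <= i <= k.+1)%N /\
    exists x : 'rV[R]_(k.+1),
      conv (Qseg R k i) x /\ Init w (conv (Ppts R k i)) x.
Proof.
pose a (l : 'I_k) := w 0 (widen_ord (leqnSn k) l).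
pose b := w 0 (@ord_max k).
have [l0 hl0] : exists l0 : 'I_k, forall l, a l0 <= a l.
  pose i0 : 'I_k := Ordinal hk.
  case: (@arg_minP _ R 'I_k i0 xpredT a isT) => l0 _ hl.
  by exists l0 => l; apply: hl.
set m := a l0.
have Q0 : forall i, conv (Qseg R k i) 0 by move=> i; apply: conv_mem; rewrite inE eqxx.
have Qe : forall i, conv (Qseg R k i) (Qend R k i)
  by move=> i; apply: conv_mem; rewrite !inE eqxx orbT.
have P0 : forall i, conv (Ppts R k i) 0 by move=> i; apply: conv_mem; rewrite inE eqxx.
have [hA|hA] := boolP ((0 <= m) && (0 <= b)).
  case/andP: hA => hm hb.
  exists 1%N; split=> //; exists 0; split=> //; apply: init_min => // s /(Ppts_val w).
  rewrite dotv0 => -[->|[l [j [hj ->]]]] //.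
  have h1 : 0 <= (1%:R - 2 * j%:R :> R) by rewrite -natrM -natrB // ler0n.
  have := hl0 l; rewrite -/m -/(a l) -/b => hl.
  have hj0 : 0 <= (j%:R : R) by exact: ler0n.
  nra.
have [hB|hB] := boolP ((b < 2 * m) && (b < 0)).
  case/andP: hB => hb1 hb2.
  exists 2%N; split=> //; exists (ebas R (@ord_max k)); split.
    by have := Qe 2%N; rewrite /Qend /=.
  apply: init_min.
    apply: conv_mem; rewrite inE; apply/orP; right; apply/allpairsP.
    exists (l0, 1%N); split => //=; first by rewrite mem_enum.
    by rewrite subnn scale0r add0r scale1r.
  move=> s /(Ppts_val w); rewrite dotv_e -/b => -[->|[l [j [hj ->]]]]; first lra.
  have := hl0 l; rewrite -/m -/(a l) => hl.
  have hj1 : (j%:R : R) <= 1%:R by rewrite ler_nat; lia.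
  have hj0 : 0 <= (j%:R : R) by exact: ler0n.
  nra.
have hb : 2 * m <= b by move: hA hB; case: (leP 0 m); case: (leP 0 b) => /=; lra.
have hm : m < 0.
  rewrite ltNge; apply/negP => hm0; move/negP: hA; apply; rewrite hm0 /=.
  by apply: le_trans hb; rewrite mulr_ge0.
have bound : forall i s, s \in Ppts R k i -> i%:R * m <= dotv w s.
  move=> i s /(Ppts_val w) -[->|[l [j [hj ->]]]].
    exact: mulr_ge0_le0 (ler0n _ _) (ltW hm).
  have h1 : 0 <= (i%:R - 2 * j%:R :> R) by rewrite -natrM -natrB // ler0n.
  have := hl0 l; rewrite -/m -/(a l) -/b => hl.
  have hj0 : 0 <= (j%:R : R) by exact: ler0n.
  nra.
case: (posnP l0) => [hl00|hl0p].
  exists 1%N; split=> //; exists (ebas R (@ord0 k)); split.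
    by have := Qe 1%N; rewrite /Qend /=.
  apply: init_min.
    apply: conv_mem; rewrite inE; apply/orP; right; apply/allpairsP.
    exists (l0, 0%N); split => //=; first by rewrite mem_enum.
    rewrite scale0r addr0 scale1r; congr ebas; apply: val_inj => /=; by rewrite hl00.
  move=> s hs; have := bound 1%N s hs; rewrite mul1r dotv_e.
  suff -> : w 0 ord0 = m by [].
  rewrite /m /a; congr (w 0 _); apply: val_inj => /=; by rewrite hl00.
exists (l0 + 2)%N; split; first by apply/andP; split; [lia | have := ltn_ord l0; lia].
exists (Qend R k (l0 + 2)); split; first exact: Qe.
have hQ : Qend R k (l0 + 2) = (l0 + 2)%:R *: ebas R (widen_ord (leqnSn k) l0).
  rewrite /Qend; have -> : ((l0 + 2)%N == 1%N) = false by apply/negbTE; lia.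
  have -> : ((l0 + 2)%N == 2%N) = false by apply/negbTE; lia.
  congr (_ *: ebas R _); apply: val_inj => /=; rewrite inordK addnK //; exact: leq_trans (ltn_ord l0) (leqnSn k).
rewrite hQ; apply: init_min.
  apply: conv_mem; rewrite inE; apply/orP; right; apply/allpairsP.
  exists (l0, 0%N); split => //=; first by rewrite mem_enum.
  by rewrite muln0 subn0 scale0r addr0.
move=> s hs; have := bound _ s hs; by rewrite dotvZ dotv_e.
Qed.
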